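(* Let $\beta>0$, $\rho>0$, let $f,c_i$ ($i\in\mathcal I=\{1,\dots,m\}$) be differentiable, let $(x_k,u_k)\in\mathbb{R}^n\times\mathbb{R}^m$, and let $H_k$ be a symmetric $n\times n$ matrix. Write $c_{ki}=c_i(x_k)$, $\nabla c_{ki}=\nabla c_i(x_k)$, $\nabla f_k=\nabla f(x_k)$, $y_{ki}=y_i(x_k,u_k;\beta,\rho)$, $\lambda_{ki}=\lambda_i(x_k,u_k;\beta,\rho)$, $\nu_{ki}=\lambda_{ki}/(y_{ki}+\lambda_{ki})$, $w_{ki}=\rho\beta/(y_{ki}+\lambda_{ki})^2$, and $B_k=H_k+\sum_{i}\nu_{ki}\nabla c_{ki}\nabla c_{ki}^T$. For $d=(d_x,d_u)\in\mathbb{R}^n\times\mathbb{R}^m$ consider the QP $$\min\ q_k(d)=\Big(\rho\nabla f_k+\sum_i\lambda_{ki}\nabla c_{ki}\Big)^Td_x+\tfrac12 d^TQ_kd\quad\text{s.t.}\quad \nu_{ki}\nabla c_{ki}^Td_x-\rho\frac{y_{ki}}{y_{ki}+\lambda_{ki}}d_{ui}=-(c_{ki}+y_{ki}),\ i\in\mathcal I,$$ where $Q_k=\begin{pmatrix}H_k+\sum_i w_{ki}\nabla c_{ki}\nabla c_{ki}^T & G_k\\ G_k^T & \mathrm{diag}(\rho^2w_{k1},\dots,\rho^2w_{km})\end{pmatrix}$ with $G_k$ the $n\times m$ matrix whose $i$th column is $\rho w_{ki}\nabla c_{ki}$. Then: (1) Any KKT point (in particular any solution) $d=(d_x,d_u)$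 of this QP satisfies the Newton system $$B_kd_x+\sum_i\rho\nu_{ki}d_{ui}\nabla c_{ki}=-\Big(\rho\nabla f_k+\sum_i\lambda_{ki}\nabla c_{ki}\Big),\qquad \rho\nu_{ki}\nabla c_{ki}^Td_x-\rho^2\frac{y_{ki}}{y_{ki}+\lambda_{ki}}d_{ui}=-\rho(c_{ki}+y_{ki}),\ i\in\mathcal I.$$ (2) If $d_x^TH_kd_x+\sum_i\nu_{ki}(\nabla c_{ki}^Td_x)^2>0$ for all nonzero $d_x\in\mathbb{R}^n$, then the QP has a unique solution, and hence the Newton system in (1) is consistent.
   Context: For $\beta,\rho>0$: $y_i(x,u;\beta,\rho)=\tfrac12[\sqrt{(c_i(x)+\rho u_i)^2+4\rho\beta}-(c_i(x)+\rho u_i)]$, $\lambda_i(x,u;\beta,\rho)=\tfrac12[\sqrt{(c_i(x)+\rho u_i)^2+4\rho\beta}+(c_i(x)+\rho u_i)]$; both are positive and $\lambda_iy_i=\rho\beta$. *)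

(* Defs.v *)
From HB Require Import structures.
From mathcomp Require Import all_boot all_order all_algebra.
Set Implicit Arguments. Unset Strict Implicit. Unset Printing Implicit Defensive.
Import Order.TTheory GRing.Theory Num.Theory.
Local Open Scope ring_scope.

(* y_i(x,u;beta,rho) and lambda_i(x,u;beta,rho), as functions of the
   values c_i(x) and u_i. *)
Definition yfun (R : rcfType) (beta rho ci ui : R) : R :=
  (Num.sqrt ((ci + rho * ui) ^+ 2 + 4 * rho * beta) - (ci + rho * ui)) / 2.
Definition lamfun (R : rcfType) (beta rho ci ui : R) : R :=
  (Num.sqrt ((ci + rho * ui) ^+ 2 + 4 * rho * beta) + (ci + rho * ui)) / 2.

Section QP.
Variables (R : rcfType) (n m : nat) (beta rho : R).
(* data at the iterate (x_k,u_k):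
   c  = (c_{k1},...,c_{km}),  u = u_k,
   gc i = grad c_i(x_k),  gf = grad f(x_k),  H = H_k *)
Variables (c u : 'cV[R]_m) (gc : 'I_m -> 'cV[R]_n) (gf : 'cV[R]_n) (H : 'M[R]_n).

Definition yk (i : 'I_m) : R := yfun beta rho (c i 0) (u i 0).
Definition lamk (i : 'I_m) : R := lamfun beta rho (c i 0) (u i 0).
Definition nuk (i : 'I_m) : R := lamk i / (yk i + lamk i).
Definition wk (i : 'I_m) : R := rho * beta / (yk i + lamk i) ^+ 2.

Definition gk : 'cV[R]_n := rho *: gf + \sum_(i < m) lamk i *: gc i.

Definition Bk : 'M[R]_n := H + \sum_(i < m) nuk i *: (gc i *m (gc i)^T).

Definition Gk : 'M[R]_(n, m) := \matrix_(j < n, i < m) (rho * wk i * gc i j 0).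

Definition Qk : 'M[R]_(n + m) :=
  block_mx (H + \sum_(i < m) wk i *: (gc i *m (gc i)^T)) Gk
           Gk^T (diag_mx (\row_(i < m) (rho ^+ 2 * wk i))).

Definition qk (dx : 'cV[R]_n) (du : 'cV[R]_m) : R :=
  (gk^T *m dx) 0 0 + 2^-1 * ((col_mx dx du)^T *m Qk *m col_mx dx du) 0 0.

Definition Ak : 'M[R]_(m, n + m) :=
  row_mx (\matrix_(i < m, j < n) (nuk i * gc i j 0))
         (diag_mx (\row_(i < m) (- (rho * (yk i / (yk i + lamk i)))))).

Definition qp_feasible (dx : 'cV[R]_n) (du : 'cV[R]_m) : Prop :=
  forall i : 'I_m,
    nuk i * ((gc i)^T *m dx) 0 0 - rho * (yk i / (yk i + lamk i)) * du i 0
    = - (c i 0 + yk i).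

Definition qp_kkt (dx : 'cV[R]_n) (du : 'cV[R]_m) : Prop :=
  qp_feasible dx du /\
  exists pi : 'cV[R]_m, col_mx gk 0 + Qk *m col_mx dx du = Ak^T *m pi.

Definition qp_solution (dx : 'cV[R]_n) (du : 'cV[R]_m) : Prop :=
  qp_feasible dx du /\
  forall (dx' : 'cV[R]_n) (du' : 'cV[R]_m), qp_feasible dx' du' -> qk dx du <= qk dx' du'.

Definition newton_system (dx : 'cV[R]_n) (du : 'cV[R]_m) : Prop :=
  Bk *m dx + \sum_(i < m) (rho * nuk i * du i 0) *: gc i = - gk /\
  forall i : 'I_m,
    rho * nuk i * ((gc i)^T *m dx) 0 0 - rho ^+ 2 * (yk i / (yk i + lamk i)) * du i 0
    = - (rho * (c i 0 + yk i)).

Definition pd_condition : Prop :=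
  forall dx : 'cV[R]_n, dx != 0 ->
    0 < (dx^T *m H *m dx) 0 0 + \sum_(i < m) nuk i * ((gc i)^T *m dx) 0 0 ^+ 2.

End QP.

(* Main.v *)
Require Import Defs.
From HB Require Import structures.
From mathcomp Require Import all_boot all_order all_algebra.
From mathcomp Require Import ring lra.
Import Order.TTheory GRing.Theory Num.Theory.
Local Open Scope ring_scope.
Set Implicit Arguments. Unset Strict Implicit.

Section Main.
Variables (R : rcfType) (n m : nat) (beta rho : R) (c u : 'cV[R]_m)
  (gc : 'I_m -> 'cV[R]_n) (gf : 'cV[R]_n) (H : 'M[R]_n).
Hypotheses (hb : 0 < beta) (hr : 0 < rho) (hH : H^T = H).

Local Notation y := (yk beta rho c u).
Local Notation lam := (lamk beta rho c u).
Local Notation nu := (nuk beta rho c u).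
Local Notation w := (wk beta rho c u).

Lemma ylam_pos i : [/\ 0 < y i, 0 < lam i & lam i * y i = rho * beta].
Proof.
rewrite /yk /lamk /yfun /lamfun.
set s := c i 0 + rho * u i 0.
have hD : 0 <= s ^+ 2 + 4 * rho * beta.
  by have := mulr_gt0 hr hb; nra.
have hq := sqr_sqrtr hD.
have h0 := sqrtr_ge0 (s ^+ 2 + 4 * rho * beta).
set q := Num.sqrt _ in hq h0 *.
have hrb : 0 < rho * beta by rewrite mulr_gt0.
split.
- suff : s < q by move=> ?; lra.
  rewrite ltNge; apply/negP => hqs.
  have : q * q <= s * s by nra.
  rewrite -expr2 hq; nra.
- suff : - s < q by move=> ?; lra.
  rewrite ltNge; apply/negP => hqs.
  have : q * q <= s * s by nra.
  rewrite -expr2 hq; nra.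
- have -> : (q + s) / 2 * ((q - s) / 2) = (q ^+ 2 - s ^+ 2) / 4 by field.
  by rewrite hq; field.
Qed.
Local Notation g := (gk beta rho c u gc gf).
Local Notation Q := (Qk beta rho c u gc H).
Definition th i := y i / (y i + lam i).
Definition ka i := lam i / y i.
Definition ee i := c i 0 + y i.
Definition al i (x : 'cV[R]_n) := ((gc i)^T *m x) 0 0.
Definition hq (x z : 'cV[R]_n) := (x^T *m H *m z) 0 0.

Lemma coefs i : [/\ 0 < nu i, 0 < th i, nu i + th i = 1, w i = nu i * th i
   & ka i = nu i / th i].
Proof.
have [hy hl hly] := ylam_pos i.
rewrite /nuk /th /ka /wk.
have hs : 0 < y i + lam i by rewrite addr_gt0.
split.
- by rewrite divr_gt0.
- by rewrite divr_gt0.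
- by field; rewrite ?(gt_eqF hs) ?(gt_eqF hy) ?(gt_eqF hl).
- by rewrite -hly; field; rewrite ?(gt_eqF hs) ?(gt_eqF hy) ?(gt_eqF hl).
- by field; rewrite ?(gt_eqF hs) ?(gt_eqF hy) ?(gt_eqF hl).
Qed.

Lemma mx11_mul (A B : 'M[R]_1) : (A *m B) 0 0 = A 0 0 * B 0 0.
Proof. by rewrite mxE big_ord1. Qed.

Lemma addE k l (A B : 'M[R]_(k,l)) i j : (A + B) i j = A i j + B i j.
Proof. by rewrite mxE. Qed.

Lemma dotC k (x z : 'cV[R]_k) : (x^T *m z) 0 0 = (z^T *m x) 0 0.
Proof. by rewrite -[x^T *m z]trmxK trmx_mul trmxK mxE. Qed.

Lemma dotE k (x z : 'cV[R]_k) : (x^T *m z) 0 0 = \sum_j x j 0 * z j 0.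
Proof. by rewrite mxE; apply eq_bigr => j _; rewrite mxE. Qed.

Lemma quadE k l (p : 'cV[R]_k) (M : 'M[R]_(k,l)) (q : 'cV[R]_l) :
  (p^T *m M *m q) 0 0 = \sum_j p j 0 * \sum_r M j r * q r 0.
Proof. by rewrite -mulmxA dotE; apply eq_bigr => j _; rewrite mxE. Qed.

Lemma quadT k l (p : 'cV[R]_k) (M : 'M[R]_(k,l)) (q : 'cV[R]_l) :
  (p^T *m M *m q) 0 0 = (q^T *m M^T *m p) 0 0.
Proof.
have -> : q^T *m M^T *m p = (p^T *m M *m q)^T by rewrite !trmx_mul trmxK mulmxA.
by rewrite [RHS]mxE.
Qed.

Lemma bqE (x1 x2 : 'cV[R]_n) (u1 u2 : 'cV[R]_m) :
  ((col_mx x1 u1)^T *m Q *m col_mx x2 u2) 0 0 =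
  hq x1 x2 + \sum_i w i * (al i x1 + rho * u1 i 0) * (al i x2 + rho * u2 i 0).
Proof.
rewrite /Qk tr_col_mx mul_row_block mul_row_col !mulmxDl !addE.
have T1 : (x1^T *m (H + \sum_i w i *: (gc i *m (gc i)^T)) *m x2) 0 0
   = hq x1 x2 + \sum_i w i * al i x1 * al i x2.
  rewrite mulmxDr mulmxDl mxE mulmx_sumr mulmx_suml summxE; congr (_ + _).
  apply eq_bigr => i _; rewrite -scalemxAr -scalemxAl mxE !mulmxA.
  rewrite -(mulmxA (x1^T *m gc i)) mx11_mul /al dotC; ring.
have T2 : forall (v : 'cV[R]_m) (z : 'cV[R]_n),
   (v^T *m (Gk beta rho c u gc)^T *m z) 0 0
   = \sum_i rho * w i * v i 0 * al i z.
  move=> v z; rewrite quadE; apply eq_bigr => i _; rewrite /al dotE mulr_sumr mulr_sumr.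
  by apply eq_bigr => j _; rewrite !mxE; ring.
have T3 : (x1^T *m Gk beta rho c u gc *m u2) 0 0
   = \sum_i rho * w i * u2 i 0 * al i x1.
  by rewrite quadT T2.
have T4 : (u1^T *m diag_mx (\row_i (rho ^+ 2 * w i)) *m u2) 0 0
   = \sum_i rho ^+ 2 * w i * u1 i 0 * u2 i 0.
  rewrite mul_mx_diag mxE; apply eq_bigr => i _; rewrite !mxE; ring.
rewrite T1 T2 T3 T4 -!addrA; congr (_ + _).
rewrite !addrA -!big_split /=; apply eq_bigr => i _; ring.
Qed.

Definition feas (x : 'cV[R]_n) (v : 'cV[R]_m) :=
  forall i, nu i * al i x - rho * th i * v i 0 = - ee i.
Definition gd (x : 'cV[R]_n) := (g^T *m x) 0 0.
Definition Qr (x : 'cV[R]_n) := hq x x + \sum_i ka i * al i x ^+ 2.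
Definition F (x : 'cV[R]_n) := gd x + 2^-1 * (hq x x + \sum_i ka i * (al i x + ee i) ^+ 2).
Definition gradF (x : 'cV[R]_n) : 'cV[R]_n :=
  g + (H *m x + \sum_i (ka i * (al i x + ee i)) *: gc i).
Definition phi (x : 'cV[R]_n) : 'cV[R]_m :=
  \col_i ((nu i * al i x + ee i) / (rho * th i)).

Lemma feasE x v : qp_feasible beta rho c u gc x v <-> feas x v.
Proof. by []. Qed.

Lemma feas_u x v i : feas x v -> al i x + rho * v i 0 = (al i x + ee i) / th i.
Proof.
move=> /(_ i) hf; have [hn ht hs _ _] := coefs i.
have -> : rho * v i 0 = (nu i * al i x + ee i) / th i.
  apply: (mulIf (lt0r_neq0 ht)). rewrite divfK ?lt0r_neq0 //. lra.
apply: (mulIf (lt0r_neq0 ht)). rewrite divfK ?lt0r_neq0 // mulrDl divfK ?lt0r_neq0 //.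
have -> : nu i = 1 - th i by lra.
ring.
Qed.

Lemma feas_phi x : feas x (phi x).
Proof.
move=> i; have [hn ht hs _ _] := coefs i; rewrite mxE.
field; rewrite ?(gt_eqF ht) ?(gt_eqF hr) //.
Qed.

Lemma feas_uniq x v : feas x v -> v = phi x.
Proof.
move=> hf; apply/matrixP => i j; rewrite ord1 mxE.
have [hn ht hs _ _] := coefs i; have e := hf i.
apply: (mulIf (lt0r_neq0 (mulr_gt0 hr ht))). rewrite divfK; last exact: lt0r_neq0 (mulr_gt0 hr ht).
lra.
Qed.

Lemma q_red x v : feas x v -> qk beta rho c u gc gf H x v = F x.
Proof.
move=> hf; rewrite /qk bqE /F -/(gd x); congr (_ + _ * (_ + _)).
apply eq_bigr => i _; rewrite (feas_u i hf).
have [hn ht hs -> ->] := coefs i.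
field; rewrite ?(gt_eqF ht) //.
Qed.

Lemma hqC x z : hq x z = hq z x.
Proof. by rewrite /hq quadT hH. Qed.

Lemma alD i x z : al i (x + z) = al i x + al i z.
Proof. by rewrite /al mulmxDr addE. Qed.
Lemma alZ i t x : al i (t *: x) = t * al i x.
Proof. by rewrite /al -scalemxAr mxE. Qed.
Lemma gdD x z : gd (x + z) = gd x + gd z.
Proof. by rewrite /gd mulmxDr addE. Qed.
Lemma gdZ t x : gd (t *: x) = t * gd x.
Proof. by rewrite /gd -scalemxAr mxE. Qed.
Lemma hqD x z1 z2 : hq x (z1 + z2) = hq x z1 + hq x z2.
Proof. by rewrite /hq mulmxDr addE. Qed.
Lemma hqZ x t z : hq x (t *: z) = t * hq x z.
Proof. by rewrite /hq -scalemxAr mxE. Qed.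
Lemma hqDl x1 x2 z : hq (x1 + x2) z = hq x1 z + hq x2 z.
Proof. by rewrite hqC hqD !(hqC z). Qed.
Lemma hqZl t x z : hq (t *: x) z = t * hq x z.
Proof. by rewrite hqC hqZ hqC. Qed.

Lemma dotDl k (A B v : 'cV[R]_k) : ((A + B)^T *m v) 0 0 = (A^T *m v) 0 0 + (B^T *m v) 0 0.
Proof. by rewrite linearD /= mulmxDl addE. Qed.

Lemma gradF_dot x v : ((gradF x)^T *m v) 0 0 =
  gd v + hq x v + \sum_i ka i * (al i x + ee i) * al i v.
Proof.
rewrite /gradF dotDl -/(gd v) dotDl -addrA; congr (_ + (_ + _)).
  by rewrite trmx_mul hH /hq.
rewrite linear_sum /= mulmx_suml summxE; apply eq_bigr => i _.
by rewrite linearZ /= -scalemxAl mxE.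
Qed.

Lemma F_expand x v : F (x + v) = F x + ((gradF x)^T *m v) 0 0 + 2^-1 * Qr v.
Proof.
have hs : \sum_i ka i * (al i (x + v) + ee i) ^+ 2 =
  \sum_i ka i * (al i x + ee i) ^+ 2 + 2 * \sum_i ka i * (al i x + ee i) * al i v
  + \sum_i ka i * al i v ^+ 2.
  rewrite mulr_sumr -!big_split; apply eq_bigr => i _; rewrite alD /=. rewrite !expr2. ring.
rewrite /F /Qr gradF_dot gdD hqD !hqDl (hqC v x) hs; by field.
Qed.

Lemma QrZ t v : Qr (t *: v) = t ^+ 2 * Qr v.
Proof.
rewrite /Qr hqZ hqZl mulrDr mulr_sumr; congr (_ + _); first ring.
by apply eq_bigr => i _; rewrite alZ; ring.
Qed.

Lemma dotZ k (A v : 'cV[R]_k) t : (A^T *m (t *: v)) 0 0 = t * (A^T *m v) 0 0.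
Proof. by rewrite -scalemxAr mxE. Qed.

Lemma quad_lin0 (S P : R) : (forall t, 0 <= t * S + t ^+ 2 * P) -> S = 0.
Proof.
move=> h; set A := `|P| + 1.
have hA : 0 < A by rewrite /A ltr_pwDr // normr_ge0.
have hPA : P < A by rewrite /A; have := ler_norm P; lra.
have := h (- S / A).
have -> : - S / A * S + (- S / A) ^+ 2 * P = (S ^+ 2 * (P - A)) / A ^+ 2.
  by field; rewrite gt_eqF.
move=> h1.
have h2 : 0 <= S ^+ 2 * (P - A).
  have -> : S ^+ 2 * (P - A) = (S ^+ 2 * (P - A)) / A ^+ 2 * A ^+ 2.
    by field; rewrite gt_eqF.
  by apply: mulr_ge0 => //; exact: sqr_ge0.
have : S ^+ 2 <= 0 by nra.
have := sqr_ge0 S => h3 h4.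
by apply/eqP; rewrite -sqrf_eq0 eq_le h4 h3.
Qed.

Lemma sq0 (z : 'cV[R]_n) : (z^T *m z) 0 0 = 0 -> z = 0.
Proof.
rewrite dotE => /eqP; rewrite psumr_eq0 => [/allP hz|i _]; last exact: mulr_ge0_le0 _ _ || (rewrite -expr2; exact: sqr_ge0).
apply/matrixP => i j; rewrite ord1 mxE.
have := hz i (mem_index_enum i); rewrite implyTb => /eqP.
by move/eqP; rewrite mulf_eq0 orbb => /eqP.
Qed.


Lemma gc_mul i x : gc i *m ((gc i)^T *m x) = al i x *: gc i.
Proof. by rewrite [(gc i)^T *m x]mx11_scalar mul_mx_scalar. Qed.

Lemma coef_eq x v i : feas x v ->
  nu i * al i x + rho * nu i * v i 0 = ka i * (al i x + ee i).
Proof.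
move=> hf; have hu := feas_u i hf; have [hn ht hs _ ->] := coefs i.
have -> : rho * nu i * v i 0 = nu i * (rho * v i 0) by ring.
have -> : rho * v i 0 = (al i x + ee i) / th i - al i x by rewrite -hu; ring.
field; by rewrite gt_eqF.
Qed.

Lemma newton_of x v : feas x v -> gradF x = 0 ->
  newton_system beta rho c u gc gf H x v.
Proof.
move=> hf hg; split.
- have -> : Bk beta rho c u gc H *m x + \sum_i (rho * nu i * v i 0) *: gc i
      = H *m x + \sum_i (ka i * (al i x + ee i)) *: gc i.
    rewrite /Bk mulmxDl mulmx_suml -addrA; congr (_ + _).
    rewrite -big_split; apply eq_bigr => i _ /=.
    by rewrite -scalemxAl -mulmxA gc_mul scalerA -scalerDl (coef_eq i hf).
  by move: hg; rewrite /gradF => /eqP; rewrite addr_eq0 => /eqP ->; rewrite opprK.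
- move=> i; have h := hf i.
  transitivity (rho * (nu i * al i x - rho * th i * v i 0)).
    by rewrite /th /al; ring.
  by rewrite h mulrN.
Qed.

Lemma sol_grad x v : qp_solution beta rho c u gc gf H x v -> gradF x = 0.
Proof.
move=> [hf hmin]; apply: sq0; set z := gradF x.
apply: (@quad_lin0 _ (2^-1 * Qr z)) => t.
have := hmin (x + t *: z) (phi (x + t *: z)) (feas_phi _).
rewrite (q_red hf) (q_red (feas_phi _)) F_expand dotZ QrZ -/z.
move=> h; nra.
Qed.

Lemma kkt_grad x v : qp_kkt beta rho c u gc gf H x v -> gradF x = 0.
Proof.
move=> [hf [pi hpi]]; apply: sq0; set z := gradF x.
pose Lz : 'cV[R]_m := \col_i (nu i * al i z / (rho * th i)).
pose e := col_mx z Lz.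
have h1 : ((col_mx g 0 + Q *m col_mx x v)^T *m e) 0 0 = (z^T *m z) 0 0.
  rewrite dotDl tr_col_mx mul_row_col trmx0 mul0mx addr0 -/(gd z) dotC mulmxA bqE.
  rewrite /z gradF_dot -/z -addrA hqC; congr (_ + (_ + _)).
  apply eq_bigr => i _; rewrite (feas_u i hf) mxE.
  have [hn ht hs -> ->] := coefs i.
  have -> : nu i = 1 - th i by lra.
  field; rewrite ?gt_eqF //.
have hA : Ak beta rho c u gc *m e = 0.
  apply/matrixP => i j; rewrite ord1 /Ak mul_row_col mul_diag_mx addE !mxE.
  have [hn ht hs _ _] := coefs i.
  have -> : \sum_j0 (\matrix_(i0, j1) (nu i0 * gc i0 j1 0)) i j0 * z j0 0
      = nu i * al i z.
    rewrite /al dotE mulr_sumr; apply eq_bigr => j0 _; rewrite !mxE; ring.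
  have [hy hl _] := ylam_pos i.
  by rewrite /th; field; rewrite (gt_eqF hy) (gt_eqF hr) (gt_eqF (addr_gt0 hy hl)).
have h2 : (((Ak beta rho c u gc)^T *m pi)^T *m e) 0 0 = 0.
  by rewrite trmx_mul trmxK -mulmxA hA mulmx0 mxE.
by rewrite -h1 hpi h2.
Qed.

Lemma ka_ge i : nu i <= ka i.
Proof.
have [hn ht hs _ ->] := coefs i.
have -> : nu i / th i = nu i + nu i * nu i / th i.
  have -> : nu i = 1 - th i by lra.
  by field; rewrite gt_eqF.
rewrite lerDl; apply: divr_ge0; [apply: mulr_ge0|]; exact: ltW.
Qed.

Lemma Qr_pos v : pd_condition beta rho c u gc H -> v != 0 -> 0 < Qr v.
Proof.
move=> hpd hv; have := hpd v hv; rewrite /Qr -/(hq v v) => h.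
apply: (lt_le_trans h); rewrite lerD2l; apply: ler_sum => i _.
by apply: ler_wpM2r; [exact: sqr_ge0 | exact: ka_ge].
Qed.

Lemma Qr_ge0 v : pd_condition beta rho c u gc H -> 0 <= Qr v.
Proof.
move=> hpd; have [->|hv] := eqVneq v 0; last exact/ltW/Qr_pos.
have := QrZ 0 0; rewrite scale0r expr0n mul0r => ->; exact: lexx.
Qed.

Definition Mm : 'M[R]_n := H + \sum_i ka i *: (gc i *m (gc i)^T).

Lemma M_mul x : Mm *m x = H *m x + \sum_i (ka i * al i x) *: gc i.
Proof.
rewrite /Mm mulmxDl mulmx_suml; congr (_ + _); apply eq_bigr => i _.
by rewrite -scalemxAl -mulmxA gc_mul scalerA.
Qed.

Lemma M_quad x : (x^T *m Mm *m x) 0 0 = Qr x.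
Proof.
rewrite -mulmxA M_mul mulmxDr addE mulmxA -/(hq x x) /Qr; congr (_ + _).
rewrite mulmx_sumr summxE; apply eq_bigr => i _.
by rewrite -scalemxAr mxE dotC -/(al i x); ring.
Qed.

Lemma M_unit : pd_condition beta rho c u gc H -> Mm \in unitmx.
Proof.
move=> hpd; rewrite unitmxE unitfE; apply/negP => /det0P [w0 hw0 hw].
have hx : w0^T != 0 by rewrite trmx_eq0.
have := Qr_pos hpd hx; rewrite -M_quad trmxK hw mul0mx mxE ltxx //.
Qed.

Lemma main :
  ((forall (dx : 'cV[R]_n) (du : 'cV[R]_m),
      qp_kkt beta rho c u gc gf H dx du -> newton_system beta rho c u gc gf H dx du) /\
   (forall (dx : 'cV[R]_n) (du : 'cV[R]_m),
      qp_solution beta rho c u gc gf H dx du -> newton_system beta rho c u gc gf H dx du)) /\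
  (pd_condition beta rho c u gc H ->
     (exists (dx : 'cV[R]_n) (du : 'cV[R]_m),
        qp_solution beta rho c u gc gf H dx du /\
        forall (dx' : 'cV[R]_n) (du' : 'cV[R]_m),
          qp_solution beta rho c u gc gf H dx' du' -> dx' = dx /\ du' = du) /\
     (exists (dx : 'cV[R]_n) (du : 'cV[R]_m), newton_system beta rho c u gc gf H dx du)).
Proof.
split; first split.
- move=> dx du h; exact: (newton_of h.1 (kkt_grad h)).
- move=> dx du h; exact: (newton_of h.1 (sol_grad h)).
move=> hpd.
pose b := g + \sum_i (ka i * ee i) *: gc i.
pose x0 := - (invmx Mm *m b).
have hMx : Mm *m x0 = - b by rewrite mulmxN mulmxA mulmxV ?M_unit // mul1mx.
have hg0 : gradF x0 = 0.
  have -> : gradF x0 = g + (Mm *m x0 + \sum_i (ka i * ee i) *: gc i).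
    rewrite /gradF M_mul; congr (_ + _); rewrite -addrA -big_split; congr (_ + _).
    by apply eq_bigr => i _; rewrite mulrDr scalerDl.
  by rewrite hMx /b opprD addrNK subrr.
have hexp : forall dx', F dx' = F x0 + 2^-1 * Qr (dx' - x0).
  move=> dx'; have {1}-> : dx' = x0 + (dx' - x0) by rewrite addrC subrK.
  by rewrite F_expand hg0 trmx0 mul0mx mxE addr0.
split; last by exists x0, (phi x0); exact: newton_of (feas_phi _) hg0.
exists x0, (phi x0); split.
  split; first exact: feas_phi.
  move=> dx' du' hf'; rewrite (q_red (feas_phi _)) (q_red hf') [F dx']hexp.
  have := Qr_ge0 (dx' - x0) hpd; have : (0:R) < 2^-1 by rewrite invr_gt0 ltr0n.
  nra.
move=> dx' du' [hf' hmin'].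
have := hmin' x0 (phi x0) (feas_phi _).
rewrite (q_red (feas_phi _)) (q_red hf') [F dx']hexp => h.
have h2 : (0:R) < 2^-1 by rewrite invr_gt0 ltr0n.
have hv : dx' - x0 = 0.
  have [//|hv'] := eqVneq (dx' - x0) 0.
  have hq0 := @Qr_pos (dx' - x0) hpd hv'.
  have : (0:R) < 0 by nra.
  by rewrite ltxx.
have ex : dx' = x0 by apply/eqP; rewrite -subr_eq0 hv.
split => //; rewrite (feas_uniq hf') ex //.
Qed.
End Main.

Theorem lemma3p1 (R : rcfType) (n m : nat) (beta rho : R)
  (c u : 'cV[R]_m) (gc : 'I_m -> 'cV[R]_n) (gf : 'cV[R]_n) (H : 'M[R]_n) :
  0 < beta -> 0 < rho -> H^T = H ->
  ((forall (dx : 'cV[R]_n) (du : 'cV[R]_m),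
      qp_kkt beta rho c u gc gf H dx du -> newton_system beta rho c u gc gf H dx du) /\
   (forall (dx : 'cV[R]_n) (du : 'cV[R]_m),
      qp_solution beta rho c u gc gf H dx du -> newton_system beta rho c u gc gf H dx du)) /\
  (pd_condition beta rho c u gc H ->
     (exists (dx : 'cV[R]_n) (du : 'cV[R]_m),
        qp_solution beta rho c u gc gf H dx du /\
        forall (dx' : 'cV[R]_n) (du' : 'cV[R]_m),
          qp_solution beta rho c u gc gf H dx' du' -> dx' = dx /\ du' = du) /\
     (exists (dx : 'cV[R]_n) (du : 'cV[R]_m), newton_system beta rho c u gc gf H dx du)).
Proof. move=> hb hr hH; exact: main. Qed.
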